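(* Let $\mathbf{C}$ be a category of $\mathbf{FI}$ type, let $M_\bullet,N_\bullet$ be free $\mathbf{C}$-modules over $\mathbb{C}$ of respective degrees $\leq c_1$ and $\leq c_2$, and let $X_\bullet\subseteq N_\bullet$ be any $\mathbf{C}$-submodule. Then the canonical extension maps $\Psi_d^e:\mathrm{Hom}_{G_d}(M_d,X_d)\to\mathrm{Hom}_{G_e}(M_e,X_e)$ are injective for all objects $e\geq d\geq c_1+c_2$.
   Context: A category $\mathbf{C}$ is of $\mathbf{FI}$ type if: (1) all Hom-sets are finite; (2) every morphism is a monomorphism and every endomorphism is an isomorphism; (3) for all objects $c,d$ the group $G_d=\mathrm{Aut}_{\mathbf{C}}(d)$ acts transitively on $\mathrm{Hom}_{\mathbf{C}}(c,d)$; (4) for every $d$ only finitely many isomorphism classes of $c$ have $\mathrm{Hom}(c,d)\neq\emptyset$; (5) every pair $c_1\to d\leftarrow c_2$ has a pullback, and every pair $f_i:p\to c_i$ has a weak push-out, i.e. a commutative pullback square $g_i:c_i\to d$ such that for every other pullback square $h_i:c_i\to z$ with $h_1f_1=h_2f_2$ there is a unique $h:d\to z$ with $hg_i=h_i$. Write $c\leq d$ if $\mathrm{Hom}(c,d)\neq\emptyset$. Write $d\geq c_1+c_2$ if $w\leq d$ for every weak push-out object $w$ of any pair of morphisms $p\to c_1$, $p\to c_2$. A $\mathbf{C}$-module is a functor to complex vector spaces. For a finite-dimensional $G_c$-representation $V$, $\mathrm{Ind}_c(V)$ is $d\mapsto\mathbb{C}[\mathrm{Hom}(c,d)]\otimes_{\mathbb{C}[G_c]}V$.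 A free module is a finite direct sum of these, of degree $\leq d$ if each summand $\mathrm{Ind}_c(V)$ ($V\neq0$) has $c\leq d$. For a free module $M$ and any module $X$, the spaces $\mathrm{Hom}_{G_d}(M_d,X_d)$ form a $\mathbf{C}$-module (functorial and left exact in $X$), obtained as the coinvariants $(M^*\otimes X)_d/G_d$ where $M^*=\bigoplus\mathrm{Ind}_{c_i}(V_i^* )$ for $M=\bigoplus\mathrm{Ind}_{c_i}(V_i)$; $\Psi_d^e$ denotes its structure map for $d\leq e$. *)

(* Defs.v *)
From HB Require Import structures.
From mathcomp Require Import all_boot all_order all_algebra.
From mathcomp Require Import reals complex.

Set Implicit Arguments.
Unset Strict Implicit.
Unset Printing Implicit Defensive.

Import GRing.Theory Num.Theory.
Local Open Scope ring_scope.

(* Categories with finite Mor-sets (axiom (1) of FI type is built in  *)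
(* by taking Mor-sets to be finTypes).                                *)
Record fcat := FCat {
  Obj : Type;
  Mor : Obj -> Obj -> finType;
  comp : forall a b c : Obj, Mor b c -> Mor a b -> Mor a c;
  idm : forall a : Obj, Mor a a;
  compA : forall (a b c d : Obj) (h : Mor c d) (g : Mor b c) (f : Mor a b),
      comp h (comp g f) = comp (comp h g) f;
  comp1m : forall (a b : Obj) (f : Mor a b), comp (idm b) f = f;
  compm1 : forall (a b : Obj) (f : Mor a b), comp f (idm a) = f
}.

Arguments comp {_ a b c} _ _.
Arguments idm {_} a.

Section FItype.
Variable C : fcat.

Definition leo (c d : Obj C) : Prop := inhabited (Mor c d).

Definition isIso (c d : Obj C) (f : Mor c d) : Prop :=
  exists g : Mor d c, comp g f = idm c /\ comp f g = idm d.

Definition isomorphic (c d : Obj C) : Prop := exists f : Mor c d, isIso f.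

Definition isPullback (p c1 c2 d : Obj C) (f1 : Mor p c1) (f2 : Mor p c2)
    (g1 : Mor c1 d) (g2 : Mor c2 d) : Prop :=
  comp g1 f1 = comp g2 f2 /\
  forall (q : Obj C) (u1 : Mor q c1) (u2 : Mor q c2),
    comp g1 u1 = comp g2 u2 ->
    exists u : Mor q p, [/\ comp f1 u = u1, comp f2 u = u2 &
       forall u' : Mor q p, comp f1 u' = u1 -> comp f2 u' = u2 -> u' = u].

Definition isWeakPushout (p c1 c2 w : Obj C) (f1 : Mor p c1) (f2 : Mor p c2)
    (g1 : Mor c1 w) (g2 : Mor c2 w) : Prop :=
  isPullback f1 f2 g1 g2 /\
  forall (z : Obj C) (h1 : Mor c1 z) (h2 : Mor c2 z),
    isPullback f1 f2 h1 h2 ->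
    exists h : Mor w z, [/\ comp h g1 = h1, comp h g2 = h2 &
       forall h' : Mor w z, comp h' g1 = h1 -> comp h' g2 = h2 -> h' = h].

Definition geSum (d c1 c2 : Obj C) : Prop :=
  forall (p w : Obj C) (f1 : Mor p c1) (f2 : Mor p c2)
         (g1 : Mor c1 w) (g2 : Mor c2 w),
    isWeakPushout f1 f2 g1 g2 -> leo w d.

Definition FI_type : Prop :=
  [/\ (forall (a b c : Obj C) (f : Mor b c) (g h : Mor a b),
         comp f g = comp f h -> g = h),
      (forall (d : Obj C) (g : Mor d d), isIso g),
  (* (3) G_d = Aut(d) = Mor(d,d) acts transitively on Hom(c,d) *)
      (forall (c d : Obj C) (f f' : Mor c d),
         exists s : Mor d d, comp s f = f'),
      (forall d : Obj C, exists (k : nat) (o : 'I_k -> Obj C),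
         forall c : Obj C, leo c d -> exists i : 'I_k, isomorphic c (o i)) &
      (forall (c1 c2 d : Obj C) (g1 : Mor c1 d) (g2 : Mor c2 d),
         exists (p : Obj C) (f1 : Mor p c1) (f2 : Mor p c2),
           isPullback f1 f2 g1 g2) /\
      (forall (p c1 c2 : Obj C) (f1 : Mor p c1) (f2 : Mor p c2),
         exists (w : Obj C) (g1 : Mor c1 w) (g2 : Mor c2 w),
           isWeakPushout f1 f2 g1 g2)].

End FItype.

(* A free module  M = (+)_{i in I} Ind_{c_i}(V_i)  is given by a finite *)
(* index type I, objects c_i, and finite-dimensional G_{c_i}-           *)
(* representations V_i = 'cV_(n_i) with matrices rho_i g (G_c = Mor c c,*)
(* all of whose elements are automorphisms by FI axiom (2)).            *)
(* Ind_c(V)_d = C[Hom(c,d)] (x)_{C[G_c]} V is modelled (canonically    *)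
(* isomorphically, since G_c acts freely on Hom(c,d)) as the space of  *)
(* functions F : Hom(c,d) -> V with F h = rho g *m F (h o g).           *)
Record freeMod (R : realType) (C : fcat) := FreeMod {
  fm_I : finType;
  fm_c : fm_I -> Obj C;
  fm_n : fm_I -> nat;
  fm_rho : forall i : fm_I, Mor (fm_c i) (fm_c i) -> 'M[R[i]]_(fm_n i);
  fm_rho1 : forall i, fm_rho (idm (fm_c i)) = 1%:M;
  fm_rhoM : forall i (g h : Mor (fm_c i) (fm_c i)),
      fm_rho (comp g h) = fm_rho g *m fm_rho h
}.

Arguments fm_I {R C} _.
Arguments fm_c {R C} _ i.
Arguments fm_n {R C} _ i.
Arguments fm_rho {R C} _ {i} _.

Section FreeModules.
Variables (R : realType) (C : fcat).
Local Notation CC := (R[i]).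

Definition fm_deg_le (M : freeMod R C) (c : Obj C) : Prop :=
  forall i : fm_I M, (0 < fm_n M i)%N -> leo (fm_c M i) c.

Definition melt (M : freeMod R C) (d : Obj C) : Type :=
  forall i : fm_I M, Mor (fm_c M i) d -> 'cV[CC]_(fm_n M i).

Definition inM (M : freeMod R C) (d : Obj C) (F : melt M d) : Prop :=
  forall (i : fm_I M) (h : Mor (fm_c M i) d) (g : Mor (fm_c M i) (fm_c M i)),
    F i h = fm_rho M g *m F i (comp h g).

Definition mzero (M : freeMod R C) (d : Obj C) : melt M d := fun i h => 0.
Definition madd (M : freeMod R C) (d : Obj C) (F G : melt M d) : melt M d :=
  fun i h => F i h + G i h.
Definition mscale (M : freeMod R C) (d : Obj C) (a : CC) (F : melt M d)
  : melt M d := fun i h => a *: F i h.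

(* the module structure map M(f) : M_d -> M_e for f : d -> e
   (on Ind_c(V): [h (x) v] |-> [f o h (x) v]) *)
Definition mact (M : freeMod R C) (d e : Obj C) (f : Mor d e) (F : melt M d)
  : melt M e :=
  fun i h' => match [pick h | comp f h == h'] with
              | Some h => F i h
              | None => 0
              end.

(* restriction along f : d -> e,  M_e -> M_d  (the transpose of M^*(f)) *)
Definition mres (M : freeMod R C) (d e : Obj C) (f : Mor d e) (F : melt M e)
  : melt M d := fun i h => F i (comp f h).

Definition isSubmodule (N : freeMod R C) (X : forall d : Obj C, melt N d -> Prop)
  : Prop :=
  [/\ (forall d F, X d F -> inM F),
      (forall d, X d (@mzero N d)),
      (forall d F G, X d F -> X d G -> X d (madd F G)),
      (forall d a F, X d F -> X d (mscale a F)) &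
      (forall d e (f : Mor d e) F, X d F -> X e (mact f F))].

Definition isGHom (M N : freeMod R C) (X : forall d : Obj C, melt N d -> Prop)
    (d : Obj C) (phi : melt M d -> melt N d) : Prop :=
  [/\ (forall F, inM F -> X d (phi F)),
      (forall a F G, inM F -> inM G ->
          phi (madd (mscale a F) G) = madd (mscale a (phi F)) (phi G)) &
      (forall (s : Mor d d) F, inM F -> phi (mact s F) = mact s (phi F))].

(* The canonical extension map  Psi_d^e : Hom_{G_d}(M_d,X_d) -> Hom_{G_e}(M_e,X_e),
   i.e. the structure map of the module (M^* (x) X)_./G_. transported to
   invariants:  phi |-> sum_{s in G_e} s . (X(f) o phi o M^*(f)^T) . s^{-1}
   for any f : d -> e (independent of f by transitivity). *)
Definition Psi (M N : freeMod R C) (d e : Obj C) (f : Mor d e)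
    (phi : melt M d -> melt N d) : melt M e -> melt N e :=
  fun F => \big[@madd N e/@mzero N e]_(st : (Mor e e * Mor e e)%type |
                                     comp st.1 st.2 == idm e)
             mact st.1 (mact f (phi (mres f (mact st.2 F)))).

End FreeModules.

(* Main.v *)
Require Import Defs.
From HB Require Import structures.
From mathcomp Require Import all_boot all_order all_algebra.
From mathcomp Require Import reals complex.
From Stdlib Require Import FunctionalExtensionality Classical.

Set Implicit Arguments.
Unset Strict Implicit.
Unset Printing Implicit Defensive.
Import GRing.Theory Num.Theory.
Local Open Scope ring_scope.

Notation cmp := Defs.comp.
Notation compA := Defs.compA.
Notation comp1m := Defs.comp1m.
Notation compm1 := Defs.compm1.

Section Aux.
Variables (R : realType) (C : fcat) (HFI : FI_type C).

Lemma monoC (a b c : Obj C) (f : Mor b c) (g h : Mor a b) :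
  cmp f g = cmp f h -> g = h.
Proof. by case: HFI => H _ _ _ _; apply: H. Qed.

Lemma invC (a : Obj C) (s : Mor a a) :
  exists t, cmp t s = idm a /\ cmp s t = idm a.
Proof. by case: HFI => _ H _ _ _; apply: H. Qed.

Lemma endo_inv (a : Obj C) (s t : Mor a a) :
  cmp s t = idm a -> cmp t s = idm a.
Proof.
move=> Hst; have [u [Hut Htu]] := invC t.
have Esu : s = u by rewrite -(compm1 s) -Htu compA Hst comp1m.
by rewrite Esu.
Qed.

Lemma conj_pair (a b d e : Obj C) (f : Mor d e) (t : Mor e e)
   (h : Mor a d) (k : Mor b d) (h1 : Mor a d) (k1 : Mor b d) :
  cmp f h1 = cmp t (cmp f h) -> cmp f k1 = cmp t (cmp f k) ->
  exists s : Mor d d, cmp s h = h1 /\ cmp s k = k1.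
Proof.
move=> Eh1 Ek1.
case: HFI => _ _ Htr _ [Hpb Hpo].
have [p [f1 [f2 Hp]]] := Hpb _ _ _ h k.
have [w [g1 [g2 [Hw Hwu]]]] := Hpo _ _ _ f1 f2.
have [u [Hu1 Hu2 _]] := Hwu _ _ _ Hp.
have Hp1 : isPullback f1 f2 h1 k1.
  case: Hp => Hc Hun; split.
    apply: (@monoC _ _ _ f).
    rewrite (compA f h1 f1) (compA f k1 f2) Eh1 Ek1.
    by rewrite -(compA t) -(compA t) -(compA f) -(compA f) Hc.
  move=> q u1 u2 Hq; apply: Hun.
  apply: (@monoC _ _ _ f); apply: (@monoC _ _ _ t).
  rewrite (compA f h u1) (compA f k u2) (compA t (cmp f h) u1) (compA t (cmp f k) u2).
  by rewrite -Eh1 -Ek1 -(compA f h1) -(compA f k1) Hq.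
have [u' [Hu1' Hu2' _]] := Hwu _ _ _ Hp1.
have [s Hs] := Htr _ _ u u'.
by exists s; split; [rewrite -Hu1 compA Hs | rewrite -Hu2 compA Hs].
Qed.

Section Mod.
Variable M : freeMod R C.

Lemma mact_hit (d e : Obj C) (f : Mor d e) (Z : melt M d) i (h : Mor (fm_c M i) d) :
  (mact f Z : melt M e) i (cmp f h) = Z i h.
Proof.
rewrite /mact; case: pickP => [h' /eqP H|H]; first by rewrite (monoC H).
by move: (H h); rewrite eqxx.
Qed.

Lemma mact_miss (d e : Obj C) (f : Mor d e) (Z : melt M d) i (y : Mor (fm_c M i) e) :
  (forall h, cmp f h <> y) -> (mact f Z : melt M e) i y = 0.
Proof.
move=> Hn; rewrite /mact; case: pickP => [h' /eqP H|//].
by case: (Hn h').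
Qed.

Lemma mact_iso (e : Obj C) (s t : Mor e e) (Z : melt M e) i (y : Mor (fm_c M i) e) :
  cmp s t = idm e -> (mact s Z : melt M e) i y = Z i (cmp t y).
Proof.
move=> Hst; have := mact_hit s Z (cmp t y).
by rewrite compA Hst comp1m.
Qed.

Lemma inM_mzero d : inM (mzero (M:=M) (d:=d)).
Proof. by move=> i h g; rewrite /mzero mulmx0. Qed.

Lemma inM_madd d (F G : melt M d) : inM F -> inM G -> inM (madd F G).
Proof. by move=> HF HG i h g; rewrite /madd mulmxDr -HF -HG. Qed.

Lemma inM_mact d e (f : Mor d e) (F : melt M d) : inM F -> inM (mact f F).
Proof.
move=> HF i h' g.
case: (classic (exists h, cmp f h = h')) => [[h <-]|Hn].
  by rewrite -compA !mact_hit; apply: HF.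
rewrite !mact_miss ?mulmx0 //; first last.
  by move=> h Hh; apply: Hn; exists h.
move=> x Hx; have [g' [Hg'g Hgg']] := invC g.
apply: Hn; exists (cmp x g').
by rewrite compA Hx -compA Hgg' compm1.
Qed.

Lemma inM_mres d e (f : Mor d e) (F : melt M e) : inM F -> inM (mres f F).
Proof. by move=> HF i h g; rewrite /mres compA; apply: HF. Qed.

End Mod.

Ltac funext2 := apply: functional_extensionality_dep => ?; apply: functional_extensionality => ?.

Lemma tagged_inj (I : eqType) (T_ : I -> Type) (i : I) (x y : T_ i) :
  Tagged T_ x = Tagged T_ y -> x = y.
Proof. by move=> /(congr1 (tagged_as (Tagged T_ x))); rewrite !tagged_asE. Qed.

Section Orb.
Variables (M : freeMod R C) (d : Obj C).

Definition orb i (x : Mor (fm_c M i) d) : {set {i0 : fm_I M & Mor (fm_c M i0) d}} :=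
  [set Tagged (fun i0 => Mor (fm_c M i0) d) (cmp x g) | g : Mor (fm_c M i) (fm_c M i)].

Definition loc (O : {set {i0 : fm_I M & Mor (fm_c M i0) d}}) (F : melt M d) : melt M d :=
  fun i x => if orb x == O then F i x else 0.

Lemma orb_comp i (x : Mor (fm_c M i) d) (g : Mor (fm_c M i) (fm_c M i)) : orb (cmp x g) = orb x.
Proof.
apply/setP => p; apply/imsetP/imsetP => [[g' _ ->]|[g' _ ->]].
  by exists (cmp g g') => //; rewrite compA.
have [gi [Hgig Hggi]] := invC g.
exists (cmp gi g') => //.
by rewrite compA -(compA x g gi) Hggi compm1.
Qed.

Lemma orb_inv i0 (x : Mor (fm_c M i0) d) i (h : Mor (fm_c M i) d) :
  orb x = orb h -> exists g : Mor (fm_c M i) (fm_c M i), Tagged (fun i0 => Mor (fm_c M i0) d) x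
                            = Tagged (fun i0 => Mor (fm_c M i0) d) (cmp h g).
Proof.
move=> E.
have : Tagged (fun i0 => Mor (fm_c M i0) d) x \in orb x.
  by apply/imsetP; exists (idm (fm_c M i0)); rewrite ?compm1.
by rewrite E => /imsetP [g _ ->]; exists g.
Qed.

Lemma inM_loc O F : inM F -> inM (loc O F).
Proof.
move=> HF i x g; rewrite /loc orb_comp; case: ifP => _; first exact: HF.
by rewrite mulmx0.
Qed.

Lemma big_eval (I : finType) (P : pred I) (G : I -> melt M d) i (x : Mor (fm_c M i) d) :
  (\big[@madd _ _ M d/mzero (M:=M) (d:=d)]_(y | P y) G y : melt M d) i x
    = \sum_(y | P y) (G y : melt M d) i x.
Proof.
by rewrite (big_morph (fun Z : melt M d => Z i x) (id1 := 0) (op1 := +%R)).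
Qed.

Lemma decomp F :
  F = \big[@madd _ _ M d/mzero (M:=M) (d:=d)]_(O : {set {i0 : fm_I M & Mor (fm_c M i0) d}}) loc O F.
Proof.
apply: functional_extensionality_dep => i; apply: functional_extensionality => x.
rewrite big_eval (bigD1 (orb x)) //= {1}/loc eqxx big1 ?addr0 //.
by move=> O /negbTE HO; rewrite /loc eq_sym HO.
Qed.

End Orb.


Section Phi.
Variables (M N : freeMod R C) (X : forall d : Obj C, melt N d -> Prop) (d : Obj C).
Variable phi : melt M d -> melt N d.
Hypothesis Hphi : isGHom X phi.

Lemma mscale1 (F : melt M d) : mscale 1 F = F.
Proof.
by apply: functional_extensionality_dep => i; apply: functional_extensionality => x; rewrite /mscale scale1r.
Qed.

Lemma mscale1N (F : melt N d) : mscale 1 F = F.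
Proof.
by apply: functional_extensionality_dep => i; apply: functional_extensionality => x; rewrite /mscale scale1r.
Qed.

Lemma phi_add F G : inM F -> inM G -> phi (madd F G) = madd (phi F) (phi G).
Proof.
case: Hphi => _ Hlin _ HF HG.
by have := Hlin 1 F G HF HG; rewrite mscale1 mscale1N.
Qed.

Lemma phi0 : phi (mzero (M:=M) (d:=d)) = mzero (M:=N) (d:=d).
Proof.
have E := phi_add (@inM_mzero M d) (@inM_mzero M d).
have E0 : madd (@mzero _ _ M d) (@mzero _ _ M d) = @mzero _ _ M d.
  by apply: functional_extensionality_dep => i; apply: functional_extensionality => x; rewrite /madd addr0.
rewrite E0 in E.
apply: functional_extensionality_dep => i; apply: functional_extensionality => x.
have := congr1 (fun Z : melt N d => Z i x) E; rewrite /madd /= => E'.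
rewrite {2}/mzero.
set a := (phi (@mzero _ _ M d) : melt N d) i x.
have : a + a = a + 0 by rewrite addr0 /a -E'.
by move/addrI.
Qed.

Lemma phi_big (I : finType) (G : I -> melt M d) : (forall y, inM (G y)) ->
  phi (\big[@madd _ _ M d/mzero (M:=M) (d:=d)]_y G y)
  = \big[@madd _ _ N d/mzero (M:=N) (d:=d)]_y phi (G y).
Proof.
move=> HG.
suff : inM (\big[@madd _ _ M d/mzero (M:=M) (d:=d)]_y G y) /\
  phi (\big[@madd _ _ M d/mzero (M:=M) (d:=d)]_y G y)
  = \big[@madd _ _ N d/mzero (M:=N) (d:=d)]_y phi (G y) by case.
apply: (big_rec2 (fun y1 y2 => inM y1 /\ phi y1 = y2)).
  by split; [exact: inM_mzero | exact: phi0].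
move=> y y1 y2 _ [Hy1 <-]; split; first exact: inM_madd.
exact: phi_add.
Qed.

End Phi.


Section Term.
Variables (M N : freeMod R C) (X : forall d : Obj C, melt N d -> Prop) (d e : Obj C).
Variable (f : Mor d e).
Variable phi : melt M d -> melt N d.
Hypothesis Hphi : isGHom X phi.

Lemma term i (h : Mor (fm_c M i) d) (F : melt M d) (HF : inM F)
   (s t : Mor e e) (Hst : cmp s t = idm e) j (k : Mor (fm_c N j) d) :
  (mact s (mact f (phi (mres f (mact t (mact f (loc (orb h) F)))))) : melt N e) j (cmp f k)
  = if [exists k1, cmp f k1 == cmp t (cmp f k)] && [exists h1, cmp f h1 == cmp t (cmp f h)]
    then (phi (loc (orb h) F) : melt N d) j k else 0.
Proof.
set G := loc (orb h) F.
have HG : inM G := inM_loc _ HF.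
have Hts := endo_inv Hst.
rewrite (mact_iso _ _ Hst).
case: (boolP [exists k1, _]) => [/existsP [k1 /eqP Hk1]|Hk] /=; last first.
  rewrite mact_miss // => k1 Hk1.
  by apply: (negP Hk); apply/existsP; exists k1; apply/eqP.
rewrite -Hk1 mact_hit.
case: (boolP [exists h1, _]) => [/existsP [h1 /eqP Hh1]|Hh] /=.
  have [sg [Hsh Hsk]] := conj_pair Hh1 Hk1.
  have [sg' [Hs's Hss']] := invC sg.
  have -> : mres f (mact t (mact f G)) = mact sg G.
    apply: functional_extensionality_dep => i0; apply: functional_extensionality => x.
    rewrite /mres (mact_iso _ _ Hts) (mact_iso _ _ Hss').
    case: (boolP (orb (cmp sg' x) == orb h)) => [/eqP Ho|Ho].
      have [g Hg] := orb_inv Ho.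
      have Ei : i0 = i := congr1 tag Hg.
      subst i0.
      have {}Hg := tagged_inj Hg.
      have Ex : x = cmp h1 g.
        by rewrite -Hsh -compA -Hg compA Hss' comp1m.
      have -> : cmp s (cmp f x) = cmp f (cmp sg' x).
        rewrite Ex (compA f h1 g) Hh1 -(compA t (cmp f h) g) (compA s t) Hst comp1m.
        by rewrite -Ex Hg compA.
      by rewrite mact_hit.
    rewrite {2}/G /loc (negbTE Ho).
    case: (classic (exists y, cmp f y = cmp s (cmp f x))) => [[y Hy]|Hn]; last first.
      by rewrite mact_miss // => y Hy; apply: Hn; exists y.
    rewrite -Hy mact_hit /G /loc.
    case: (boolP (orb y == orb h)) => [/eqP Hoy|//].
    exfalso; move/negP: Ho; apply.
    have [g Hg] := orb_inv Hoy.
    have Ei : i0 = i := congr1 tag Hg.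
    subst i0.
    have {}Hg := tagged_inj Hg.
    have Ex : cmp f x = cmp f (cmp h1 g).
      rewrite -(comp1m (cmp f x)) -Hts -compA -Hy Hg (compA f h g) compA -Hh1.
      by rewrite -compA.
    have Ex' := monoC Ex.
    rewrite Ex' -Hsh -(compA sg h g) compA Hs's comp1m.
    by rewrite orb_comp.
  case: Hphi => _ _ Heq.
  by rewrite Heq // -Hsk mact_hit.
have -> : mres f (mact t (mact f G)) = @mzero _ _ M d.
  apply: functional_extensionality_dep => i0; apply: functional_extensionality => x.
  rewrite /mres (mact_iso _ _ Hts).
  case: (classic (exists y, cmp f y = cmp s (cmp f x))) => [[y Hy]|Hn]; last first.
    by rewrite mact_miss // => y Hy; apply: Hn; exists y.
  rewrite -Hy mact_hit /G /loc.
  case: (boolP (orb y == orb h)) => [/eqP Hoy|//].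
  exfalso.
  have [g Hg] := orb_inv Hoy.
  have Ei : i0 = i := congr1 tag Hg.
  subst i0.
  have {}Hg := tagged_inj Hg.
  have Ex : cmp f x = cmp (cmp t (cmp f h)) g.
    by rewrite -(comp1m (cmp f x)) -Hts -compA -Hy Hg (compA f h g) compA.
  have [g' [Hg'g Hgg']] := invC g.
  apply: (negP Hh); apply/existsP; exists (cmp x g'); apply/eqP.
  by rewrite compA Ex -compA Hgg' compm1.
by rewrite (phi0 Hphi).
Qed.

End Term.


Lemma sum_if (I : finType) (P : pred I) (c : pred I) n (a : 'cV[R[i]]_n) :
  \sum_(x | P x) (if c x then a else 0) = (\sum_(x | P x) (c x : nat)%:R) *: a.
Proof.
by rewrite scaler_suml; apply: eq_bigr => x _; case: (c x); rewrite ?scale1r ?scale0r.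
Qed.

Lemma main_aux (M N : freeMod R C)
    (X : forall d : Obj C, melt N d -> Prop)
    (d e : Obj C) (f : Mor d e)
    (phi1 phi2 : melt M d -> melt N d) :
  isGHom X phi1 -> isGHom X phi2 ->
  (forall F : melt M e, inM F -> Psi f phi1 F = Psi f phi2 F) ->
  forall F : melt M d, inM F -> phi1 F = phi2 F.
Proof.
move=> H1 H2 Hpsi F HF.
rewrite (decomp F) (phi_big H1) ?(phi_big H2); last 2 first.
- by move=> O; apply: inM_loc.
- by move=> O; apply: inM_loc.
apply: eq_bigr => O _.
case: (classic (exists i (h : Mor (fm_c M i) d), orb h = O)) => [[i [h <-]]|HO]; last first.
  have -> : loc O F = @mzero _ _ M d.
    apply: functional_extensionality_dep => i0; apply: functional_extensionality => x.
    rewrite /loc; case: eqP => // Ho; exfalso; apply: HO; by exists i0, x.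
  by rewrite (phi0 H1) (phi0 H2).
apply: functional_extensionality_dep => j; apply: functional_extensionality => k.
have := congr1 (fun Z : melt N e => Z j (cmp f k)) (Hpsi _ (inM_mact f (inM_loc (orb h) HF))).
rewrite /Psi /= !big_eval.
under eq_bigr => st /eqP Hst do rewrite (@term M N X d e f phi1 H1 i h F HF _ _ Hst j k).
under [in X in _ = X -> _]eq_bigr => st /eqP Hst do rewrite (@term M N X d e f phi2 H2 i h F HF _ _ Hst j k).
rewrite !sum_if; apply: scalerI.
rewrite -natr_sum pnatr_eq0 -lt0n.
have c1 : [exists k1, cmp f k1 == cmp (idm e) (cmp f k)].
  by apply/existsP; exists k; rewrite comp1m.
have c2 : [exists h1, cmp f h1 == cmp (idm e) (cmp f h)].
  by apply/existsP; exists h; rewrite comp1m.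
rewrite (bigD1 (idm e, idm e)) /=; last by rewrite comp1m.
by rewrite c1 c2.
Qed.

End Aux.

Theorem mainTheorem16 (R : realType) (C : fcat) (HFI : FI_type C)
    (M N : freeMod R C) (c1 c2 : Obj C)
    (HM : fm_deg_le M c1) (HN : fm_deg_le N c2)
    (X : forall d : Obj C, melt N d -> Prop) (HX : isSubmodule X)
    (d e : Obj C) (f : Mor d e) (Hd : geSum d c1 c2)
    (phi1 phi2 : melt M d -> melt N d) :
  isGHom X phi1 -> isGHom X phi2 ->
  (forall F : melt M e, inM F -> Psi f phi1 F = Psi f phi2 F) ->
  forall F : melt M d, inM F -> phi1 F = phi2 F.
Proof. exact: (main_aux HFI). Qed.
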